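(* Let $s\le L$ be positive integers, $\mathbf{D}\in\mathbb{R}^{N\times N}$, $\mathbf{H}\in\mathbb{R}^{N\times L}$, $\mathbf{A}\in\mathbb{R}^{m\times N}$ with $m<N$, and consider the system $\mathbf{x}_k=\mathbf{D}\mathbf{x}_{k-1}+\mathbf{H}\mathbf{h}_k$, $\mathbf{y}_k=\mathbf{A}\mathbf{x}_k$, with inputs satisfying $\|\mathbf{h}_k\|_0\le s$. If the system is output $s$-sparse-controllable, then $s\ge m-\operatorname{rank}(\mathbf{A}\mathbf{D})$ and, for all $\lambda\in\mathbb{C}$, the matrix $\mathbf{A}\begin{bmatrix}\lambda\mathbf{I}-\mathbf{D} & \mathbf{H}\end{bmatrix}\in\mathbb{C}^{m\times(N+L)}$ has rank $m$.
   Context: $\|\cdot\|_0$ denotes the number of nonzero entries. The system is output $s$-sparse-controllable if for every initial state $\mathbf{x}_0\in\mathbb{R}^N$ and every desired output $\mathbf{y}\in\mathbb{R}^m$ there exist a finite $K$ and inputs $\mathbf{h}_1,\dots,\mathbf{h}_K\in\mathbb{R}^L$ with $\|\mathbf{h}_k\|_0\le s$ for all $k$ such that $\mathbf{y}_K=\mathbf{A}\mathbf{x}_K=\mathbf{y}$. *)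

(* Defs.v *)
From HB Require Import structures.
From mathcomp Require Import all_boot all_order all_algebra.
From mathcomp Require Import reals.
From mathcomp Require Export complex.
Set Implicit Arguments. Unset Strict Implicit. Unset Printing Implicit Defensive.
Import Order.TTheory GRing.Theory Num.Theory.
Local Open Scope ring_scope.

Definition l0norm (R : nzRingType) (L : nat) (h : 'cV[R]_L) : nat :=
  #|[set i : 'I_L | h i 0 != 0]|.

Definition final_state (R : nzRingType) (N L : nat) (D : 'M[R]_N) (H : 'M[R]_(N, L))
  (x0 : 'cV[R]_N) (hs : seq 'cV[R]_L) : 'cV[R]_N :=
  foldl (fun x h => D *m x + H *m h) x0 hs.

Definition output_sparse_controllable (R : nzRingType) (m N L : nat)
  (D : 'M[R]_N) (H : 'M[R]_(N, L)) (A : 'M[R]_(m, N)) (s : nat) : Prop :=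
  forall (x0 : 'cV[R]_N) (y : 'cV[R]_m),
    exists hs : seq 'cV[R]_L,
      [/\ (0 < size hs)%N,
          all (fun h => (l0norm h <= s)%N) hs
        & A *m final_state D H x0 hs = y].

Definition cmx (R : rcfType) (p q : nat) (M : 'M[R]_(p, q)) : 'M[complex R]_(p, q) :=
  map_mx (fun r : R => (r%:C)%C) M.

(* Main.v *)
Require Import Defs.
From HB Require Import structures.
From mathcomp Require Import all_boot all_order all_algebra.
From mathcomp Require Import reals complex.
Import Order.TTheory GRing.Theory Num.Theory.
Local Open Scope ring_scope.

Lemma exists_nonroot (R : numDomainType) (p : {poly R}) :
  p != 0 -> exists t, p.[t] != 0.
Proof.
move=> p0; set rs := [seq i%:R | i <- iota 0 (size p)] : seq R.
have : has (fun t => p.[t] != 0) rs.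
  apply/negPn/negP => /hasPn H0; move/eqP: p0; apply.
  apply: (roots_geq_poly_eq0 (rs:=rs)).
  - by apply/allP => t /H0; rewrite negbK.
  - rewrite map_inj_uniq ?iota_uniq // => a b /eqP; rewrite eqr_nat => /eqP.
    done.
  - by rewrite size_map size_iota.
by case/hasP => t _ ?; exists t.
Qed.

Lemma rank_sum_rows (R : fieldType) n k (B : 'M[R]_(n, k)) (S : {set 'I_n}) :
  (\rank (\sum_(i in S) <<row i B>>)%MS <= #|S|)%N.
Proof.
rewrite -sum1_card.
apply: (big_ind2 (fun (a : nat) (M : 'M_k) => \rank M <= a)%N).
- by rewrite mxrank0.
- move=> a1 M1 a2 M2 h1 h2; apply: leq_trans (leq_of_leqif (mxrank_adds_leqif _ _)) _.
  exact: leq_add.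
- by move=> i _; rewrite genmxE rank_leq_row.
Qed.

Lemma exists_nonzero_row (R : fieldType) p q (M : 'M[R]_(p, q)) :
  M != 0 -> exists i, row i M != 0.
Proof.
move=> M0; case/boolP: [exists i, row i M != 0] => [/existsP//|/existsP nex].
case/negP: M0; apply/eqP/row_matrixP => i; rewrite row0; apply/eqP.
by apply/negPn/negP => h; apply nex; exists i.
Qed.

Lemma exists_nonzero_col (R : fieldType) p q (M : 'M[R]_(p, q)) :
  M != 0 -> exists j, col j M != 0.
Proof.
move=> M0; have : M^T != 0 by rewrite -trmx0 (inj_eq trmx_inj).
case/exists_nonzero_row => j; rewrite -tr_col -trmx0 (inj_eq trmx_inj) => hj; by exists j.
Qed.
Lemma part2 (R : rcfType) (m N L s : nat)
  (D : 'M[R]_N) (H : 'M[R]_(N, L)) (A : 'M[R]_(m, N)) :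
  output_sparse_controllable D H A s ->
  forall lambda : complex R,
      \rank (cmx A *m row_mx (lambda%:M - cmx D) (cmx H)) = m.
Proof.
move=> ctrl lam; apply/eqP; rewrite eqn_leq rank_leq_row /= leqNgt; apply/negP => rk.
set M := cmx A *m row_mx _ _ in rk.
have : kermx M != 0 by rewrite -mxrank_eq0 mxrank_ker subn_eq0 -ltnNge rk.
case/exists_nonzero_row => i; set w := row i _ => w0.
have wM : w *m M = 0 by rewrite /w -row_mul mulmx_ker row0.
rewrite /M mulmxA mul_mx_row -row_mx0 in wM.
case/eq_row_mx: wM => wD wH.
set z := w *m cmx A in wD wH.
have zD : z *m cmx D = lam *: z.
  move/eqP: wD; rewrite mulmxBr subr_eq0 mul_mx_scalar => /eqP <-.
  done.
have inv : forall hs (x : 'cV[R]_N), z *m cmx x = 0 ->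
    z *m cmx (final_state D H x hs) = 0.
  rewrite /final_state; elim=> [|h hs IH] x zx //=; apply: IH.
  rewrite /cmx map_mxD !map_mxM -/(cmx _) mulmxDr !mulmxA zD wH mul0mx addr0.
  by rewrite -scalemxAl zx scaler0.
have : w != 0 by [].
case/exists_nonzero_col => j wj.
have [hs [_ _ hy]] := ctrl 0 (delta_mx j 0).
have := inv hs 0; rewrite /cmx map_mx0 mulmx0 => /(_ erefl).
rewrite -/(cmx _) /z -mulmxA -[cmx A *m _]map_mxM hy /cmx map_delta_mx -colE.
by move/eqP; rewrite (negbTE wj).
Qed.
Lemma part1 (R : numFieldType) (m N L s : nat)
  (D : 'M[R]_N) (H : 'M[R]_(N, L)) (A : 'M[R]_(m, N)) :
  output_sparse_controllable D H A s ->
  (m - \rank (A *m D) <= s)%N.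
Proof.
move=> ctrl; rewrite leqNgt; apply/negP; rewrite ltn_subRL.
case: m A ctrl => [|m] A ctrl hlt //.
pose W (S : {set 'I_L}) : 'M_m.+1 :=
  ((A *m D)^T + \sum_(i in S) <<row i (A *m H)^T>>)%MS.
have rkW : forall S : {set 'I_L}, (#|S| <= s)%N -> (\rank (W S) < m.+1)%N.
  move=> S hS; apply: leq_ltn_trans hlt; rewrite /W.
  apply: leq_trans (leq_of_leqif (mxrank_adds_leqif (A *m D)^T (\sum_(i in S) <<row i (A *m H)^T>>)%MS)) _.
  rewrite mxrank_tr leq_add2l; apply: leq_trans _ hS; exact: rank_sum_rows.
have ex : forall S : {set 'I_L}, exists c : 'cV_m.+1, (#|S| <= s)%N -> c != 0 /\ W S *m c = 0.
  move=> S; case: (boolP (#|S| <= s)%N) => hS; last by exists 0.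
  have : cokermx (W S) != 0.
    by rewrite -mxrank_eq0 mxrank_coker subn_eq0 -ltnNge rkW.
  case/exists_nonzero_col => j cj; exists (col j (cokermx (W S))) => _; split => //.
  by rewrite colE mulmxA mulmx_coker mul0mx.
have [c hc] := fin_all_exists ex.
pose P := \prod_(S : {set 'I_L} | (#|S| <= s)%N) \poly_(i < m.+1) c S (inord i) 0.
have P0 : P != 0.
  rewrite prodf_seq_neq0; apply/allP => S _; apply/implyP => hS.
  have [cS0 _] := hc S hS.
  have [i ci] : exists i, row i (c S) != 0 by apply: exists_nonzero_row.
  apply/eqP => /(congr1 (fun p : {poly R} => p`_i)); rewrite coef_poly ltn_ord coef0 inord_val => ci0.
  by case/negP: ci; apply/eqP/rowP => k; rewrite !mxE ord1 ci0.
have [t Pt] : exists t, P.[t] != 0 by apply: exists_nonroot.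
pose y : 'cV[R]_m.+1 := \col_i t ^+ i.
have [hs [hs0 hsp hy]] := ctrl 0 y.
move: hs0 hsp hy; case/lastP: hs => [//|hs h] _.
rewrite all_rcons /final_state foldl_rcons -/(final_state _ _ _ hs) => /andP[hl _] hy.
set x := final_state D H 0 hs in hy.
pose S := [set i | h i 0 != 0].
have hS : (#|S| <= s)%N by [].
have [_ WS] := hc S hS.
have sub : (y^T <= W S)%MS.
  rewrite -hy mulmxDr linearD /=; apply: addmx_sub_adds.
  - by rewrite mulmxA trmx_mul submxMl.
  - rewrite mulmxA trmx_mul mulmx_sum_row.
    apply: summx_sub => i _; case: (boolP (i \in S)) => iS.
    + by apply: scalemx_sub; apply: (sumsmx_sup i) => //; rewrite genmxE.
    + by rewrite inE negbK in iS; rewrite mxE (eqP iS) scale0r sub0mx.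
case/submxP: sub => X hX.
have yc0 : y^T *m c S = 0 by rewrite hX -mulmxA WS mulmx0.
move: Pt; rewrite horner_prod prodf_seq_neq0 => /allP /(_ S) .
rewrite mem_index_enum => /(_ erefl); rewrite hS /= horner_poly.
have -> : \sum_(i < m.+1) c S (inord i) 0 * t ^+ i = (y^T *m c S) 0 0.
  by rewrite mxE; apply: eq_bigr => j _; rewrite !mxE inord_val mulrC.
by rewrite yc0 mxE eqxx.
Qed.

Theorem corollary1 (R : realType) (m N L s : nat)
  (D : 'M[R]_N) (H : 'M[R]_(N, L)) (A : 'M[R]_(m, N)) :
  (0 < s)%N -> (s <= L)%N -> (m < N)%N ->
  output_sparse_controllable D H A s ->
  (m - \rank (A *m D) <= s)%N /\
  (forall lambda : complex R,
      \rank (cmx A *m row_mx (lambda%:M - cmx D) (cmx H)) = m).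
Proof.
move=> _ _ _ ctrl; split; [exact: part1 ctrl | exact: part2 ctrl].
Qed.
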